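(* The $k$-linear category $k[\Delta_{a,\mathrm{inj}}]$ is free as a left and as a right $u_a(\Omega_a)$-module, where $u_a(\Omega_a)$ denotes the image of the $k$-linear functor $u_a\colon\Omega_a\to k[\Delta_{a,\mathrm{inj}}]$.
   Context: Let $k$ be a field. For a small category $\mathcal C$, $k[\mathcal C]$ is its $k$-linearization: same objects, $k[\mathcal C](x,y)$ the $k$-vector space with basis $\mathrm{Hom}_{\mathcal C}(x,y)$, composition extended bilinearly. $\Delta_{a,\mathrm{inj}}$ is the category with objects $[n]=\{0<1<\dots<n\}$ for $n\ge0$ and $[-1]=\varnothing$, and injective order-preserving maps as morphisms; for $0\le i\le n$ (and $n\ge 0$), $\delta^i\colon[n-1]\to[n]$ is the injective order-preserving map omitting $i$ (so $\delta^0\colon[-1]\to[0]$ is the empty map). $\Omega_a$ is the $k$-linear category with objects $[n]$, $n\ge -1$, generated by arrows $d_n\colon[n-1]\to[n]$ for $n\ge 0$ subject only to the relations $d_{n+1}d_n=0$ for $n\ge0$. The $k$-linear functor $u_a\colon\Omega_a\to k[\Delta_{a,\mathrm{inj}}]$ is the identity on objects and sends $d_n\mapsto\sum_{i=0}^n(-1)^i\delta^i$. *)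

(* Defs.v *)
From HB Require Import structures.
From mathcomp Require Import all_boot all_order all_algebra zify.
Set Implicit Arguments. Unset Strict Implicit. Unset Printing Implicit Defensive.
Import GRing.Theory.
Local Open Scope ring_scope.

(* Object [n] of Delta_{a,inj} (n >= -1) is encoded by its cardinality N = n+1 : nat,
   i.e. by the finite ordinal 'I_N = {0 < ... < N-1}.  [-1] = empty set <-> 0. *)

Definition incrb p q (f : {ffun 'I_p -> 'I_q}) : bool :=
  [forall i : 'I_p, forall j : 'I_p, (i < j)%N ==> (f i < f j)%N].

Record dhom (p q : nat) := DHom { dfun :> {ffun 'I_p -> 'I_q}; dfunP : incrb dfun }.
HB.instance Definition _ p q := [isSub for @dfun p q].
HB.instance Definition _ p q := [Finite of dhom p q by <:].

Lemma dcomp_incr p q r (g : dhom q r) (f : dhom p q) :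
  incrb [ffun i => g (f i)].
Proof.
apply/forallP => i; apply/forallP => j; apply/implyP => lij.
rewrite !ffunE.
have /forallP/(_ i)/forallP/(_ j)/implyP Hf := dfunP f.
have /forallP/(_ (f i))/forallP/(_ (f j))/implyP Hg := dfunP g.
exact: Hg (Hf lij).
Qed.

Definition dcomp p q r (g : dhom q r) (f : dhom p q) : dhom p r :=
  DHom (dcomp_incr g f).

Lemma lift_incr N (i : 'I_N.+1) : incrb [ffun j : 'I_N => lift i j].
Proof.
apply/forallP => a; apply/forallP => b; apply/implyP => lab.
rewrite !ffunE /= /bump.
case: (leqP i a) => ha; case: (leqP i b) => hb /=; lia.
Qed.

Definition delta N (i : 'I_N.+1) : dhom N N.+1 := DHom (lift_incr i).

(* The k-linearization k[Delta_{a,inj}]: hom space = k-vector space with basis dhom p q. *)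
Notation kD k p q := {ffun dhom p q -> (k : fieldType)^o} (only parsing).

Section Lin.
Variable k : fieldType.

Definition bvec p q (f : dhom p q) : kD k p q := [ffun g => (g == f)%:R].

Definition kcomp p q r (b : kD k q r) (a : kD k p q) : kD k p r :=
  [ffun h => \sum_(g : dhom q r) \sum_(f : dhom p q)
              (dcomp g f == h)%:R * (b g * a f)].

(* identity of object m (and 0 when m <> n) *)
Definition kid m n : kD k m n :=
  [ffun f : dhom m n => ((m == n) && [forall i : 'I_m, val (f i) == val i])%:R].

Definition ua_d N : kD k N N.+1 :=
  \sum_(i : 'I_N.+1) ((-1) ^+ i) *: bvec (delta i).

(* image under u_a of the unique composable path of generators d from m to n
   (the identity if m = n, d_n ... d_{m+1} if m < n; 0 if m > n, where the
   hom space is zero anyway).  Omega_a(m,n) is spanned by this path. *)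
Fixpoint ua_path m n : kD k m n :=
  match n with
  | 0 => kid m 0
  | n'.+1 => if m == n'.+1 then kid m n'.+1 else kcomp (ua_d n') (ua_path m n')
  end.

Definition inImg m n (x : kD k m n) : Prop := exists c : k, x = c *: ua_path m n.

(* k[Delta](p,-) is a free left u_a(Omega_a)-module (action by postcomposition):
   there are elements E z (for each object z, a list of elements of k[Delta](p,z))
   such that for every object q the map
     (beta_{z,j} in u_a(Omega_a)(z,q))  |->  sum_{z,j} beta_{z,j} o E z j
   is bijective.  (Objects z > q contribute nothing: k[Delta](z,q) = 0.) *)
Definition left_free_at (p : nat) : Prop :=
  exists E : forall z : nat, seq (kD k p z),
  forall q : nat,
    (forall x : kD k p q,
       exists beta : forall (z : 'I_q.+1) (j : 'I_(size (E z))), kD k z q,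
         (forall z j, inImg (beta z j)) /\
         x = \sum_(z : 'I_q.+1) \sum_(j : 'I_(size (E z)))
               kcomp (beta z j) (nth 0 (E z) j)) /\
    (forall beta : forall (z : 'I_q.+1) (j : 'I_(size (E z))), kD k z q,
       (forall z j, inImg (beta z j)) ->
       \sum_(z : 'I_q.+1) \sum_(j : 'I_(size (E z)))
            kcomp (beta z j) (nth 0 (E z) j) = 0 ->
       forall z j, beta z j = 0).

(* k[Delta](-,q) is a free right u_a(Omega_a)-module (action by precomposition);
   generators live in k[Delta](z,q), hence z <= q. *)
Definition right_free_at (q : nat) : Prop :=
  exists E : forall z : 'I_q.+1, seq (kD k z q),
  forall p : nat,
    (forall x : kD k p q,
       exists beta : forall (z : 'I_q.+1) (j : 'I_(size (E z))), kD k p z,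
         (forall z j, inImg (beta z j)) /\
         x = \sum_(z : 'I_q.+1) \sum_(j : 'I_(size (E z)))
               kcomp (nth 0 (E z) j) (beta z j)) /\
    (forall beta : forall (z : 'I_q.+1) (j : 'I_(size (E z))), kD k p z,
       (forall z j, inImg (beta z j)) ->
       \sum_(z : 'I_q.+1) \sum_(j : 'I_(size (E z)))
            kcomp (nth 0 (E z) j) (beta z j) = 0 ->
       forall z j, beta z j = 0).

End Lin.

(* Main.v *)
Require Import Defs.
From HB Require Import structures.
From mathcomp Require Import all_boot all_order all_algebra zify ring.
Set Implicit Arguments. Unset Strict Implicit. Unset Printing Implicit Defensive.
Import GRing.Theory.
Local Open Scope ring_scope.

Lemma dhomP a b (f g : dhom a b) : (forall i, val (f i) = val (g i)) -> f = g.
Proof. by move=> H; apply: val_inj; apply/ffunP => i; apply: val_inj; apply: H. Qed.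

Lemma dhom_lt a b (f : dhom a b) (i j : 'I_a) : (i < j)%N -> (f i < f j)%N.
Proof. by have /forallP/(_ i)/forallP/(_ j)/implyP := dfunP f. Qed.

Lemma dhom_le a b (f : dhom a b) (i j : 'I_a) : (i <= j)%N -> (f i <= f j)%N.
Proof.
rewrite leq_eqVlt => /orP [/eqP/val_inj -> //|/(dhom_lt f)]; exact: ltnW.
Qed.

Lemma dhom_inj a b (f : dhom a b) : injective f.
Proof.
move=> i j E; apply/eqP; case: (ltngtP i j) => // H.
- by have := dhom_lt f H; rewrite E ltnn.
- by have := dhom_lt f H; rewrite E ltnn.
- by apply/eqP/val_inj.
Qed.

Lemma dhom_card a b (f : dhom a b) : (a <= b)%N.
Proof. by have := leq_card _ (@dhom_inj _ _ f); rewrite !card_ord. Qed.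

Lemma kD_triv (k : fieldType) a b (x y : {ffun dhom a b -> k^o}) : (b < a)%N -> x = y.
Proof. by move=> H; apply/ffunP => f; have := dhom_card f; rewrite leqNgt H. Qed.

Definition fg a b (f : dhom a b) : nat := \big[minn/b]_(x : 'I_a) val (f x).

Lemma leq_bigmin_seq (I : eqType) (s : seq I) (F : I -> nat) b i :
  (i <= \big[minn/b]_(x <- s) F x)%N = (i <= b)%N && all (fun x => i <= F x)%N s.
Proof.
elim: s => [|x s IH]; first by rewrite big_nil andbT.
by rewrite big_cons leq_min IH /= andbCA.
Qed.

Lemma fgP a b (f : dhom a b) i :
  (i <= fg f)%N = (i <= b)%N && [forall x, i <= f x]%N.
Proof.
rewrite /fg leq_bigmin_seq; congr (_ && _).
apply/allP/forallP => H x; first by apply: H; rewrite mem_index_enum.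
by move=> _; apply: H.
Qed.

Lemma fg_le a b (f : dhom a b) : (fg f <= b)%N.
Proof. by have := leqnn (fg f); rewrite {1}fgP => /andP[]. Qed.

Lemma fg_eq a b (f : dhom a b) m :
  (forall i, (i <= m)%N = (i <= b)%N && [forall x, i <= f x]%N) -> fg f = m.
Proof.
move=> H; apply/eqP; rewrite eqn_leq; apply/andP; split.
  by rewrite H -fgP.
by rewrite fgP -H.
Qed.

Lemma fg_le_val a b (f : dhom a b) x : (fg f <= f x)%N.
Proof. by have := leqnn (fg f); rewrite {1}fgP => /andP[_ /forallP]. Qed.

Lemma idd_incr p : incrb [ffun i : 'I_p => i].
Proof. by apply/forallP => i; apply/forallP => j; apply/implyP; rewrite !ffunE. Qed.
Definition idd p : dhom p p := DHom (idd_incr p).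

Lemma dcomp_idd p q (f : dhom p q) : dcomp (idd q) f = f.
Proof. by apply: dhomP => i; rewrite !ffunE. Qed.
Lemma dcomp_iddr p q (f : dhom p q) : dcomp f (idd p) = f.
Proof. by apply: dhomP => i; rewrite !ffunE. Qed.

Section Lin.
Variable k : fieldType.
Implicit Types (p q r : nat).

Lemma scaleE (c x : k) : c *: (x : k^o) = c * x.
Proof. by []. Qed.

Lemma bvecE p q (f g : dhom p q) : bvec k f g = (g == f)%:R.
Proof. by rewrite ffunE. Qed.

Lemma kcompE p q r (b : kD k q r) (a : kD k p q) h :
  kcomp b a h = \sum_(g : dhom q r) \sum_(f : dhom p q) (dcomp g f == h)%:R * (b g * a f).
Proof. by rewrite ffunE. Qed.

Lemma kcompZl p q r c (b : kD k q r) (a : kD k p q) : kcomp (c *: b) a = c *: kcomp b a.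
Proof.
apply/ffunP => h; rewrite !ffunE scaler_sumr; apply: eq_bigr => g _.
rewrite scaler_sumr; apply: eq_bigr => f _; rewrite ffunE !scaleE; by rewrite -mulrA mulrCA.
Qed.

Lemma kcompZr p q r c (b : kD k q r) (a : kD k p q) : kcomp b (c *: a) = c *: kcomp b a.
Proof.
apply/ffunP => h; rewrite !ffunE scaler_sumr; apply: eq_bigr => g _.
rewrite scaler_sumr; apply: eq_bigr => f _; rewrite ffunE !scaleE; by rewrite (mulrCA (b g)) (mulrCA _ c).
Qed.

Lemma kcompDl p q r (b1 b2 : kD k q r) (a : kD k p q) : kcomp (b1 + b2) a = kcomp b1 a + kcomp b2 a.
Proof.
apply/ffunP => h; rewrite !ffunE -big_split; apply: eq_bigr => g _.
rewrite -big_split; apply: eq_bigr => f _; rewrite ffunE; by rewrite mulrDl mulrDr.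
Qed.

Lemma kcompDr p q r (b : kD k q r) (a1 a2 : kD k p q) : kcomp b (a1 + a2) = kcomp b a1 + kcomp b a2.
Proof.
apply/ffunP => h; rewrite !ffunE -big_split; apply: eq_bigr => g _.
rewrite -big_split; apply: eq_bigr => f _; rewrite ffunE; by rewrite !mulrDr.
Qed.

Lemma kcomp0l p q r (a : kD k p q) : kcomp (0 : kD k q r) a = 0.
Proof. by apply/ffunP => h; rewrite !ffunE big1 // => g _; rewrite big1 // => f _; rewrite ffunE mul0r mulr0. Qed.

Lemma kcomp0r p q r (b : kD k q r) : kcomp b (0 : kD k p q) = 0.
Proof. by apply/ffunP => h; rewrite !ffunE big1 // => g _; rewrite big1 // => f _; rewrite ffunE !mulr0. Qed.

Lemma kcomp_suml p q r I (s : seq I) (F : I -> kD k q r) (a : kD k p q) :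
  kcomp (\sum_(i <- s) F i) a = \sum_(i <- s) kcomp (F i) a.
Proof.
by apply: (big_morph (fun b => kcomp b a)) => [b1 b2|]; [exact: kcompDl|exact: kcomp0l].
Qed.

Lemma kcomp_sumr p q r I (s : seq I) (b : kD k q r) (F : I -> kD k p q) :
  kcomp b (\sum_(i <- s) F i) = \sum_(i <- s) kcomp b (F i).
Proof.
by apply: (big_morph (fun a => kcomp b a)) => [b1 b2|]; [exact: kcompDr|exact: kcomp0r].
Qed.

Lemma sum_delta (X : finType) (d : X) (F : X -> k) : \sum_(g : X) (g == d)%:R * F g = F d.
Proof.
rewrite (bigD1 d) //= eqxx mul1r big1 ?addr0 // => g /negbTE ->; exact: mul0r.
Qed.

Lemma sum_delta' (X : finType) (d : X) (F : X -> k) : \sum_(g : X) (d == g)%:R * F g = F d.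
Proof. by rewrite -(sum_delta d); apply: eq_bigr => g _; rewrite eq_sym. Qed.

Lemma kcomp_bvec p q r (g : dhom q r) (f : dhom p q) :
  kcomp (bvec k g) (bvec k f) = bvec k (dcomp g f).
Proof.
apply/ffunP => h; rewrite !ffunE.
rewrite (eq_bigr (fun g' => (g' == g)%:R * \sum_(f0 : dhom p q) (dcomp g' f0 == h)%:R * (bvec k f f0))).
  rewrite sum_delta (eq_bigr (fun f0 => (f0 == f)%:R * (dcomp g f0 == h)%:R)).
    by rewrite sum_delta eq_sym.
  by move=> f0 _; rewrite ffunE mulrC.
move=> g' _; rewrite big_distrr; apply: eq_bigr => f0 _; rewrite !ffunE /=; ring.
Qed.

Lemma ffun_decomp p q (a : kD k p q) : a = \sum_(f : dhom p q) a f *: bvec k f.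
Proof.
apply/ffunP => h; rewrite sum_ffunE.
rewrite (eq_bigr (fun f => (h == f)%:R * a f)) ?sum_delta' //.
by move=> f _; rewrite !ffunE /= mulrC.
Qed.


Lemma kid_bvec p : kid k p p = bvec k (idd p).
Proof.
apply/ffunP => g; rewrite !ffunE eqxx /=; congr (_%:R); congr (nat_of_bool _).
apply/idP/idP => [/forallP H|/eqP ->]; last by apply/forallP => i; rewrite ffunE.
by apply/eqP; apply: dhomP => i; rewrite ffunE; apply/eqP; apply: H.
Qed.

Lemma kcomp_idl p q (a : kD k p q) : kcomp (kid k q q) a = a.
Proof.
rewrite [in RHS](ffun_decomp a) {1}(ffun_decomp a) kcomp_sumr; apply: eq_bigr => f _.
by rewrite kcompZr kid_bvec kcomp_bvec dcomp_idd.
Qed.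

Lemma kcomp_idr p q (b : kD k p q) : kcomp b (kid k p p) = b.
Proof.
rewrite [in RHS](ffun_decomp b) {1}(ffun_decomp b) kcomp_suml; apply: eq_bigr => f _.
by rewrite kcompZl kid_bvec kcomp_bvec dcomp_iddr.
Qed.

Lemma ua_dE n : ua_d k n = \sum_(i : 'I_n.+1) ((-1) ^+ i) *: bvec k (delta i).
Proof. by []. Qed.

Lemma kcomp_ud_bvec p n (f : dhom p n) :
  kcomp (ua_d k n) (bvec k f) = \sum_(i : 'I_n.+1) ((-1) ^+ i) *: bvec k (dcomp (delta i) f).
Proof.
rewrite ua_dE kcomp_suml; apply: eq_bigr => i _; by rewrite kcompZl kcomp_bvec.
Qed.

Lemma kcomp_bvec_ud p q (e : dhom p.+1 q) :
  kcomp (bvec k e) (ua_d k p) = \sum_(i : 'I_p.+1) ((-1) ^+ i) *: bvec k (dcomp e (delta i)).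
Proof.
rewrite ua_dE kcomp_sumr; apply: eq_bigr => i _; by rewrite kcompZr kcomp_bvec.
Qed.

End Lin.

Lemma comb (V : zmodType) n (T : nat -> nat -> V) :
  (forall a b, (a <= b)%N -> (b < n.+1)%N -> T b.+1 a = - T a b) ->
  \sum_(b < n.+2) \sum_(a < n.+1) T b a = 0.
Proof.
move=> HT.
have E b a : T b a = (if (a < b)%N then T b a else 0) + (if (a < b)%N then 0 else T b a).
  by case: ifP => _; rewrite ?addr0 ?add0r.
rewrite (eq_bigr (fun b : 'I_n.+2 => \sum_(a < n.+1) (if (a < b)%N then T b a else 0)
   + \sum_(a < n.+1) (if (a < b)%N then 0 else T b a))); last first.
  by move=> b _; rewrite -big_split; apply: eq_bigr => a _; exact: E.
rewrite big_split /= big_ord_recl big1 ?add0r; last by move=> a _.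
rewrite [X in _ + X]big_ord_recr /= [X in _ + (_ + X)]big1 ?addr0; last by move=> a _; rewrite ltn_ord.
rewrite (eq_bigr (fun b : 'I_n.+1 => - \sum_(a < n.+1) (if (a <= b)%N then T a b else 0))); last first.
  move=> b _; rewrite -sumrN; apply: eq_bigr => a _; rewrite /bump leq0n add1n ltnS.
  by case: ifP => H; [rewrite HT // ltn_ord|rewrite oppr0].
rewrite sumrN [X in _ + X = _]exchange_big /= addrC; apply/eqP; rewrite addr_eq0 opprK; apply/eqP.
apply: eq_bigr => a _; apply: eq_bigr => b _; by rewrite ltnNge; case: (b <= a)%N.
Qed.

Lemma cosimp n z (f : dhom z n) a b : (a <= b)%N -> (b < n.+1)%N ->
  dcomp (delta (inord b.+1 : 'I_n.+2)) (dcomp (delta (inord a : 'I_n.+1)) f)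
  = dcomp (delta (inord a : 'I_n.+2)) (dcomp (delta (inord b : 'I_n.+1)) f).
Proof.
move=> ab bn; apply: dhomP => x; rewrite !ffunE /= !inordK; try lia.
rewrite /bump; case: (leqP a (f x)) => h1; case: (leqP b (f x)) => h2 /=;
 case: leqP => h3; case: leqP => h4 /=; lia.
Qed.

Section Lin2.
Variable k : fieldType.

Lemma dd z n (y : kD k z n) : kcomp (ua_d k n.+1) (kcomp (ua_d k n) y) = 0.
Proof.
rewrite (ffun_decomp y) !kcomp_sumr big1 // => f _.
rewrite !kcompZr kcomp_ud_bvec kcomp_sumr.
under eq_bigr do rewrite kcompZr kcomp_ud_bvec scaler_sumr.
rewrite exchange_big /=.
pose T := fun b a : nat => ((-1) ^+ (b + a)) *: bvec k (dcomp (delta (inord b : 'I_n.+2)) (dcomp (delta (inord a : 'I_n.+1)) f)).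
rewrite (eq_bigr (fun j : 'I_n.+2 => \sum_(i < n.+1) T j i)); last first.
  by move=> j _; apply: eq_bigr => i _; rewrite /T !inord_val scalerA -exprD addnC.
rewrite comb ?scaler0 // => a b ab bn; by rewrite /T cosimp // addSn exprS mulN1r scaleNr addnC.
Qed.

Lemma ua_path_id q : ua_path k q q = kid k q q.
Proof. by case: q => //= n; rewrite eqxx. Qed.

Lemma ua_path_d n : ua_path k n n.+1 = ua_d k n.
Proof. by rewrite /= ltn_eqF // ua_path_id kcomp_idr. Qed.

Lemma ua_path0 z n : (z <= n)%N -> ua_path k z n.+2 = 0.
Proof.
move=> zn; rewrite /= ltn_eqF; last by lia.
by rewrite ltn_eqF; [exact: dd| lia].
Qed.

End Lin2.

Section Tri.
Variable k : fieldType.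
Variables (X : finType) (G : pred X) (n1 n2 : nat).
Variables (u : 'I_n1 -> {ffun X -> k^o}) (w : 'I_n2 -> {ffun X -> k^o}).
Variables (pi1 : 'I_n1 -> X) (pi2 : 'I_n2 -> X).
Hypothesis hu : forall j, u j = [ffun y => (y == pi1 j)%:R].
Hypothesis hpi1 : injective pi1.
Hypothesis hG1 : forall j, G (pi1 j).
Hypothesis hcov1 : forall x, G x -> exists j, pi1 j = x.
Hypothesis hG2 : forall i, ~~ G (pi2 i).
Hypothesis hcov2 : forall x, ~~ G x -> exists i, pi2 i = x.
Hypothesis hw : forall i, w i (pi2 i) != 0.
Hypothesis hw' : forall i i', i != i' -> w i (pi2 i') = 0.

Lemma tri_u_eval j z : u j z = (z == pi1 j)%:R.
Proof. by rewrite hu ffunE. Qed.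

Lemma tri_uE j j' : u j (pi1 j') = (j' == j)%:R.
Proof.
rewrite tri_u_eval; case: (eqVneq j' j) => [->|ne]; first by rewrite eqxx.
by case: eqP => // /hpi1 E; rewrite E eqxx in ne.
Qed.

Lemma tri_u2 j i : u j (pi2 i) = 0.
Proof.
rewrite tri_u_eval; case: eqP => // E.
by have := hG2 i; rewrite E hG1.
Qed.

Lemma tri_indep (a : 'I_n1 -> k) (c : 'I_n2 -> k) :
  \sum_j a j *: u j + \sum_i c i *: w i = 0 -> (forall j, a j = 0) /\ (forall i, c i = 0).
Proof.
move=> H.
have evalE z : (\sum_j a j *: u j + \sum_i c i *: w i) z = \sum_j a j * u j z + \sum_i c i * w i z.
  by rewrite ffunE !sum_ffunE; congr (_ + _); apply: eq_bigr => j _; rewrite ffunE.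
have hc : forall i, c i = 0.
  move=> i; have := congr1 (fun v : {ffun X -> k^o} => v (pi2 i)) H; rewrite /= evalE ffunE.
  rewrite big1 ?add0r; last by move=> j _; rewrite tri_u2 mulr0.
  rewrite (bigD1 i) //= big1 ?addr0; last by move=> i' ne; rewrite hw' ?mulr0.
  by move/eqP; rewrite mulf_eq0 (negbTE (hw i)) orbF => /eqP.
split => // j; have := congr1 (fun v : {ffun X -> k^o} => v (pi1 j)) H; rewrite /= evalE ffunE.
rewrite [X in _ + X]big1 ?addr0; last by move=> i _; rewrite hc mul0r.
rewrite (bigD1 j) //= big1 ?addr0; last by move=> j' ne; rewrite tri_uE eq_sym (negbTE ne) mulr0.
by rewrite tri_uE eqxx mulr1.
Qed.

Lemma tri_span x : exists a c : nat -> k,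
  x = \sum_(j < n1) a j *: u j + \sum_(i < n2) c i *: w i.
Proof.
pose c m := if insub m is Some i then x (pi2 i) / w i (pi2 i) else 0.
pose y := x - \sum_(i < n2) c i *: w i.
pose a m := if insub m is Some j then y (pi1 j) else 0.
exists a, c.
have ca (i : 'I_n2) : c i = x (pi2 i) / w i (pi2 i) by rewrite /c valK.
have aa (j : 'I_n1) : a j = y (pi1 j) by rewrite /a valK.
apply/ffunP => z; rewrite ffunE !sum_ffunE.
case: (boolP (G z)) => Gz.
  have [j <-] := hcov1 Gz.
  rewrite (bigD1 j) //= big1 ?addr0; last first.
    by move=> j' ne; rewrite ffunE tri_uE eq_sym (negbTE ne) /= scaleE mulr0.
  rewrite ffunE tri_uE eqxx scaleE mulr1 aa /y !ffunE sum_ffunE.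
  by rewrite subrK.
have [i <-] := hcov2 Gz.
rewrite big1 ?add0r; last by move=> j _; rewrite ffunE tri_u2 scaleE mulr0.
rewrite (bigD1 i) //= big1 ?addr0; last first.
  by move=> i' ne; rewrite ffunE hw' ?scaleE ?mulr0.
by rewrite ffunE ca scaleE divfK.
Qed.

End Tri.

Lemma bvec_inj (k : fieldType) a b (f g : dhom a b) : bvec k f = bvec k g -> f = g.
Proof.
move=> /(congr1 (fun v : kD k a b => v f)); rewrite !ffunE eqxx.
by case: eqP => // _ /eqP; rewrite oner_eq0.
Qed.

Definition Eseq (k : fieldType) a b (P : pred (dhom a b)) : seq (kD k a b) :=
  map (@bvec k a b) (enum P).

Lemma Eseq_pick (k : fieldType) a b (P : pred (dhom a b)) :
  exists pi : 'I_(size (Eseq k P)) -> dhom a b,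
    [/\ forall j, P (pi j), forall j : 'I_(size (Eseq k P)), nth 0 (Eseq k P) j = bvec k (pi j),
        injective pi & forall f, P f -> exists j, pi j = f].
Proof.
have ex (j : 'I_(size (Eseq k P))) : exists f, P f && (nth 0 (Eseq k P) j == bvec k f).
  have /mapP [f] : nth 0 (Eseq k P) j \in Eseq k P by apply: mem_nth.
  by rewrite mem_enum => Pf ->; exists f; rewrite eqxx andbT; exact: Pf.
exists (fun j => xchoose (ex j)).
have H j := andP (xchooseP (ex j)).
have U : uniq (Eseq k P) by rewrite map_inj_uniq ?enum_uniq //; exact: bvec_inj.
split.
- by move=> j; case: (H j).
- by move=> j; case: (H j) => _ /eqP.
- move=> j j' E; case: (H j) => _ /eqP E1; case: (H j') => _ /eqP E2.
  apply: val_inj; apply/eqP; rewrite -(nth_uniq 0 _ _ U) ?ltn_ord //.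
  by rewrite E1 E2 E.
- move=> f Pf.
  have Hin : bvec k f \in Eseq k P by apply: map_f; rewrite mem_enum.
  have Hi : (index (bvec k f) (Eseq k P) < size (Eseq k P))%N by rewrite index_mem.
  exists (Ordinal Hi); apply: (@bvec_inj k); case: (H (Ordinal Hi)) => _ /eqP <-.
  by rewrite /= nth_index.
Qed.

Lemma mkD_incr a b (g : 'I_a -> nat) (Hb : forall i, (g i < b)%N)
  (Hi : forall i j : 'I_a, (i < j)%N -> (g i < g j)%N) :
  incrb [ffun i => (Ordinal (Hb i) : 'I_b)].
Proof. by apply/forallP => i; apply/forallP => j; apply/implyP; rewrite !ffunE /=; apply: Hi. Qed.

Definition mkD a b (g : 'I_a -> nat) (Hb : forall i, (g i < b)%N)
  (Hi : forall i j : 'I_a, (i < j)%N -> (g i < g j)%N) : dhom a b := DHom (@mkD_incr a b g Hb Hi).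

Lemma mkDE a b g Hb Hi i : val (@mkD a b g Hb Hi i) = g i.
Proof. by rewrite ffunE. Qed.

Lemma deltaE N (i : 'I_N.+1) x : val (delta i x) = bump i x.
Proof. by rewrite ffunE. Qed.

Lemma dcompE p q r (g : dhom q r) (f : dhom p q) x : dcomp g f x = g (f x).
Proof. by rewrite ffunE. Qed.

Lemma left_eq0 p n (f : dhom p n) (i : 'I_n.+1) :
  (dcomp (delta i) f == dcomp (delta ord0) f) = (i <= fg f)%N.
Proof.
rewrite fgP -ltnS ltn_ord /=; apply/eqP/forallP => [E x|H].
  have := congr1 (fun h : dhom p n.+1 => val (h x)) E; rewrite /= !ffunE /= /bump.
  by rewrite leq0n; case: leqP => //= _; lia.
by apply: (@dhomP p n.+1) => x; rewrite !ffunE /= /bump leq0n H.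
Qed.

Lemma fg_shift p n (f : dhom p n) : fg (dcomp (delta ord0) f) = (fg f).+1.
Proof.
apply: fg_eq => -[|i]; first by rewrite leq0n; apply/esym/forallP => x.
rewrite ltnS fgP ltnS; congr (_ && _); apply/eq_forallb => x.
by rewrite !ffunE /= /bump leq0n add1n ltnS.
Qed.

Lemma fg_other p n (f : dhom p n) (i : 'I_n.+1) : (fg f < i)%N ->
  fg (dcomp (delta i) f) = fg f.
Proof.
move=> lt.
have [x0 Hx0] : exists x0, val (f x0) = fg f.
  have : ~~ ((fg f).+1 <= fg f)%N by rewrite ltnn.
  rewrite fgP.
  have -> : ((fg f).+1 <= n)%N by have := ltn_ord i; lia.
  rewrite /= negb_forall => /existsP [x]; rewrite -ltnNge ltnS => Hx.
  by exists x; apply/eqP; rewrite eqn_leq Hx fg_le_val.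
apply: fg_eq => j; apply/idP/andP => [Hj|[_ /forallP H]].
  split; first by have := fg_le f; lia.
  apply/forallP => x; rewrite !ffunE /=.
  by have := fg_le_val f x; rewrite /bump; case: (i <= f x)%N => /=; lia.
have := H x0; rewrite !ffunE /= /bump.
have -> : (i <= f x0)%N = false by apply/negbTE; rewrite -ltnNge Hx0.
by rewrite Hx0.
Qed.

Lemma delta0_inj p n : injective (fun f : dhom p n => dcomp (delta ord0) f).
Proof.
move=> f g E; apply: (@dhomP _ _) => x.
have := congr1 (fun h : dhom p n.+1 => val (h x)) E; rewrite /= !ffunE /= /bump leq0n.
by move=> /eqP; rewrite eqSS => /eqP.
Qed.

Lemma left_cover p n (x : dhom p n.+1) : odd (fg x) ->
  exists f : dhom p n, dcomp (delta ord0) f = x.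
Proof.
move=> ox.
have pos y : (0 < x y)%N.
  by have := fg_le_val x y; case: (fg x) ox => //= m _; lia.
have Hb y : ((x y).-1 < n)%N by have := ltn_ord (x y); have := pos y; lia.
have Hi (y z : 'I_p) : (y < z)%N -> ((x y).-1 < (x z).-1)%N.
  by move=> /(dhom_lt x); have := pos y; lia.
exists (mkD Hb Hi); apply: (@dhomP _ _) => y; rewrite !ffunE /= /bump leq0n.
by have := pos y; lia.
Qed.

Lemma right_e0 p q (e : dhom p.+1 q) : fg e = 0%N -> val (e ord0) = 0%N.
Proof.
move=> H.
have hq : (0 < q)%N by have := dhom_card e; lia.
have : ~~ (1 <= fg e)%N by rewrite H.
rewrite fgP hq /= negb_forall => /existsP [x]; rewrite -ltnNge ltnS leqn0 => /eqP ex.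
by have := @dhom_le _ _ e ord0 x (leq0n x); rewrite ex; lia.
Qed.

Lemma right_piv p q (e e' : dhom p.+1 q) (i : 'I_p.+1) :
  val (e ord0) = 0%N -> val (e' ord0) = 0%N ->
  dcomp e (delta i) = dcomp e' (delta ord0) -> i = ord0 /\ e = e'.
Proof.
move=> h0 h0' E.
have Ev y : val (e (lift i y)) = val (e' (lift ord0 y)).
  by have := congr1 (fun h : dhom p q => val (h y)) E; rewrite /= !ffunE /=.
have i0 : i = ord0.
  apply/eqP; apply/negPn/negP => ne.
  have nz : (i : nat) <> 0%N by move=> h; apply: (negP ne); apply/eqP/val_inj.
  have pp : (0 < p)%N by have := ltn_ord i; lia.
  pose y := Ordinal pp.
  have := Ev y.
  have -> : lift i y = ord0.
    by apply: val_inj; rewrite /= /bump /=; case: (i : nat) nz.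
  rewrite h0.
  have : (val (e' ord0) < val (e' (lift ord0 y)))%N by apply: dhom_lt; rewrite /= /bump.
  lia.
split=> //; subst i; apply: (@dhomP _ _) => t.
case: (unliftP ord0 t) => [y ->|->]; first exact: Ev.
by rewrite h0 h0'.
Qed.

Lemma right_notG p q (e : dhom p.+1 q) : val (e ord0) = 0%N -> fg (dcomp e (delta ord0)) != 0%N.
Proof.
move=> h0; rewrite -lt0n fgP.
have hq : (0 < q)%N by have := dhom_card e; lia.
rewrite hq /=; apply/forallP => y; rewrite !ffunE /=.
have : (val (e ord0) < val (e (lift ord0 y)))%N by apply: dhom_lt; rewrite /= /bump.
by rewrite h0 => H; exact: H.
Qed.

Lemma right_cover p q (x : dhom p q) : fg x != 0%N ->
  exists e : dhom p.+1 q, [/\ val (e ord0) = 0%N, fg e = 0%N & dcomp e (delta ord0) = x].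
Proof.
rewrite -lt0n fgP => /andP [hq /forallP pos].
pose g (t : 'I_p.+1) : nat := if unlift ord0 t is Some y then val (x y) else 0%N.
have Hb t : (g t < q)%N by rewrite /g; case: unlift => [y|] //; exact: ltn_ord.
have Hi (t t' : 'I_p.+1) : (t < t')%N -> (g t < g t')%N.
  rewrite /g; case: (unliftP ord0 t) => [y ->|->]; case: (unliftP ord0 t') => [y' ->|->].
  - by rewrite !lift0 ltnS => /(dhom_lt x).
  - by rewrite lift0 ltn0.
  - by move=> _; exact: pos.
  - by [].
pose e := mkD Hb Hi.
have e0 : val (e ord0) = 0%N by rewrite !ffunE /= /g unlift_none.
exists e; split=> //.
  by apply/eqP; rewrite -leqn0; have := fg_le_val e ord0; rewrite e0.
by apply: (@dhomP _ _) => y; rewrite !ffunE /= /g liftK.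
Qed.

Lemma ua_path_other (k : fieldType) a b : b != a -> b != a.+1 -> ua_path k a b = 0.
Proof.
move=> h1 h2; case: (ltnP b a) => hab; first exact: kD_triv.
case: b hab h1 h2 => [|[|m]] hab h1 h2; try lia.
by apply: ua_path0; lia.
Qed.

Lemma split1 (V : zmodType) N (F : 'I_N -> V) z0 :
  (forall z, z != z0 -> F z = 0) -> \sum_z F z = F z0.
Proof. by move=> H; rewrite (bigD1 z0) //= big1 ?addr0. Qed.

Lemma split2 (V : zmodType) N (F : 'I_N -> V) z0 z1 : z1 != z0 ->
  (forall z, z != z0 -> z != z1 -> F z = 0) -> \sum_z F z = F z0 + F z1.
Proof.
move=> ne H; rewrite (bigD1 z0) //= (bigD1 z1) //= big1 ?addr0 // => z /andP [].
exact: H.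
Qed.

Lemma alt_sum0 (R : ringType) L : \sum_(i < L) (-1 : R) ^+ i = (odd L)%:R.
Proof.
elim: L => [|L IH]; first by rewrite big_ord0.
rewrite big_ord_recr /= IH -signr_odd; case: (odd L) => /=; rewrite ?expr1 ?expr0.
  by rewrite addrN.
by rewrite add0r.
Qed.

Lemma alt_sum (R : ringType) m N : (m < N)%N -> ~~ odd m ->
  \sum_(i < N) (-1 : R) ^+ i * (i <= m)%:R = 1.
Proof.
move=> mN em.
have E := alt_sum0 R m.+1.
rewrite (big_ord_widen_cond N (fun _ => true) (fun i => (-1 : R) ^+ i) mN) /= (negbTE em) /= in E.
rewrite ?mulr1n in E; rewrite -[in RHS]E [in RHS]big_mkcond /=.
by apply: eq_bigr => i _; rewrite ltnS; case: leqP => _; rewrite ?mulr1 ?mulr0.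
Qed.

Lemma fg_sq q (x : dhom q q) : fg x = 0%N.
Proof.
case: q x => [|m] x; first by have := fg_le x; lia.
have [g _ gK] := injF_bij (@dhom_inj _ _ x).
have := fg_le_val x (g ord0); rewrite gK /=; lia.
Qed.

Definition from0 (T : Type) (i : 'I_0) : T.
Proof. by case: i. Defined.

Definition Eleft (k : fieldType) p z := Eseq k (fun f : dhom p z => ~~ odd (fg f)).
Definition Eright (k : fieldType) q (z : 'I_q.+1) := Eseq k (fun e : dhom z q => fg e == 0%N).
Arguments Eright k q z : clear implicits.

Lemma left_free (k : fieldType) p : left_free_at k p.
Proof.
exists (Eleft k p) => q.
case: q => [|n].
  have [pi1 [P1 N1 I1 C1]] := Eseq_pick k (fun f : dhom p 0 => ~~ odd (fg f)).
  have hu : forall j : 'I_(size (Eleft k p 0)), nth 0 (Eleft k p 0) j = [ffun y => (y == pi1 j)%:R] by move=> j; rewrite /Eleft N1.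
  have hcov2 : forall x : dhom p 0, ~~ ~~ odd (fg x) -> exists i : 'I_0, from0 _ i = x.
    by move=> x; have := fg_le x; rewrite leqn0 => /eqP ->.
  have hG2 : forall i : 'I_0, ~~ ~~ odd (fg (from0 (dhom p 0) i)) by case.
  have hw : forall i : 'I_0, (fun _ => (0 : kD k p 0)) i (from0 _ i) != 0 by case.
  have hw' : forall i i' : 'I_0, i != i' -> (fun _ => (0 : kD k p 0)) i (from0 _ i') = 0 by case.
  split.
    move=> x.
    have [a [c ->]] := tri_span (G := fun f : dhom p 0 => ~~ odd (fg f)) hu I1 P1 C1 hG2 hcov2 hw hw' x.
    exists (fun (z : 'I_1) (j : 'I_(size (Eleft k p z))) => a j *: ua_path k z 0); split; first by move=> z j; exists (a j).
    rewrite big_ord1 big_ord0 addr0; apply: eq_bigr => j _.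
    by rewrite kcompZl ua_path_id kcomp_idl.
  move=> beta Hb S.
  have ex z j : exists c : k, beta z j == c *: ua_path k z 0 by case: (Hb z j) => c ->; exists c.
  pose C z j := xchoose (ex z j).
  have HC z j : beta z j = C z j *: ua_path k z 0 by apply/eqP; exact: (xchooseP (ex z j)).
  rewrite big_ord1 in S.
  have S' : \sum_(j < size (Eleft k p 0)) C ord0 j *: nth 0 (Eleft k p 0) j
            + \sum_(i < 0) (fun _ => 0) i *: (fun _ => (0 : kD k p 0)) i = 0.
    rewrite big_ord0 addr0 -[in RHS]S; apply: eq_bigr => j _.
    by rewrite HC kcompZl ua_path_id kcomp_idl.
  have [H0 _] := tri_indep (G := fun f : dhom p 0 => ~~ odd (fg f)) hu I1 P1 hG2 hw hw' S'.
  move=> z; rewrite (ord1 z) => j.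
  by rewrite HC H0 scale0r.
have [pi1 [P1 N1 I1 C1]] := Eseq_pick k (fun f : dhom p n.+1 => ~~ odd (fg f)).
have [rho [P2 N2 I2 C2]] := Eseq_pick k (fun f : dhom p n => ~~ odd (fg f)).
pose u (j : 'I_(size (Eleft k p n.+1))) := nth 0 (Eleft k p n.+1) j.
pose w (i : 'I_(size (Eleft k p n))) := kcomp (ua_d k n) (nth 0 (Eleft k p n) i).
pose pi2 (i : 'I_(size (Eleft k p n))) := dcomp (delta ord0) (rho i).
have hu : forall j : 'I_(size (Eleft k p n.+1)), u j = [ffun y => (y == pi1 j)%:R] by move=> j; rewrite /u /Eleft N1.
have hG2 : forall i, ~~ ~~ odd (fg (pi2 i)) by move=> i; rewrite negbK /pi2 fg_shift /=; exact: P2.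
have hcov2 : forall x : dhom p n.+1, ~~ ~~ odd (fg x) -> exists i, pi2 i = x.
  move=> x; rewrite negbK => ox.
  have [f Ef] := left_cover ox.
  have Pf : ~~ odd (fg f) by move: ox; rewrite -Ef fg_shift /=.
  by have [i Ei] := C2 f Pf; exists i; rewrite /pi2 Ei.
have wE (i : 'I_(size (Eleft k p n))) (y : dhom p n.+1) : w i y = \sum_(i' < n.+1) (-1) ^+ i' * (y == dcomp (delta i') (rho i))%:R.
  rewrite /w /Eleft N2 kcomp_ud_bvec sum_ffunE; apply: eq_bigr => i' _.
  by rewrite !ffunE.
have hw : forall i, w i (pi2 i) != 0.
  move=> i; rewrite wE.
  rewrite (eq_bigr (fun i' : 'I_n.+1 => (-1) ^+ i' * (i' <= fg (rho i))%:R)); last first.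
    by move=> i' _; rewrite /pi2 eq_sym left_eq0.
  by rewrite alt_sum ?oner_eq0 //; first [exact: P2 | by have := fg_le (rho i); rewrite ltnS].
have hw' : forall i i', i != i' -> w i (pi2 i') = 0.
  move=> i i' ne; rewrite wE big1 // => i'' _.
  case: eqP; rewrite ?mulr0 // /pi2 => E.
  case: (leqP i'' (fg (rho i))) => h.
    have := left_eq0 (rho i) i''; rewrite h => /eqP E2.
    move: E; rewrite E2 => /delta0_inj /I2 E3.
    by rewrite E3 eqxx in ne.
  have := congr1 (fun f => odd (fg f)) E; rewrite /= fg_shift fg_other //= (negbTE (P2 i)).
  by rewrite (negbTE (P2 i')).
have Fz (beta : forall (z : 'I_n.+2) (j : 'I_(size (Eleft k p z))), kD k z n.+1) C :
   (forall z j, beta z j = C z j *: ua_path k z n.+1) ->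
   \sum_(z < n.+2) \sum_(j < size (Eleft k p z)) kcomp (beta z j) (nth 0 (Eleft k p z) j)
   = \sum_(j < size (Eleft k p n.+1)) C ord_max j *: u j
     + \sum_(i < size (Eleft k p n)) C (@Ordinal n.+2 n (leqnSn n.+1)) i *: w i.
  move=> HC.
  rewrite (split2 _ (z0 := ord_max) (z1 := @Ordinal n.+2 n (leqnSn n.+1))); last first.
  - move=> z h0 h1; apply: big1 => j _; rewrite HC ua_path_other ?scaler0 ?kcomp0l //.
    + by apply: contra h0 => /eqP h; apply/eqP/val_inj; rewrite /=; lia.
    + by apply: contra h1 => /eqP h; apply/eqP/val_inj; rewrite /=; lia.
  - by apply/eqP => /(congr1 val) /=; lia.
  congr (_ + _); apply: eq_bigr => j _; rewrite HC kcompZl.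
    by rewrite ua_path_id kcomp_idl.
  by rewrite ua_path_d.
split.
  move=> x.
  have [a [c ->]] := tri_span (G := fun f : dhom p n.+1 => ~~ odd (fg f)) hu I1 P1 C1 hG2 hcov2 hw hw' x.
  exists (fun (z : 'I_n.+2) (j : 'I_(size (Eleft k p z))) => (if val z == n.+1 then a j else if val z == n then c j else 0) *: ua_path k z n.+1).
  split; first by move=> z j; eexists.
  rewrite (Fz _ (fun (z : 'I_n.+2) (j : 'I_(size (Eleft k p z))) => (if val z == n.+1 then a j else if val z == n then c j else 0))) //.
  by rewrite /= eqxx (ltn_eqF (ltnSn n)) eqxx.
move=> beta Hb S.
have ex z j : exists c : k, beta z j == c *: ua_path k z n.+1 by case: (Hb z j) => c ->; exists c.
pose C z j := xchoose (ex z j).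
have HC z j : beta z j = C z j *: ua_path k z n.+1 by apply/eqP; exact: (xchooseP (ex z j)).
rewrite (Fz _ C HC) in S.
have [H0 H1] := tri_indep (G := fun f : dhom p n.+1 => ~~ odd (fg f)) hu I1 P1 hG2 hw hw' S.
move=> z.
case: (eqVneq z ord_max) => [-> j|n0]; first by rewrite HC H0 scale0r.
case: (eqVneq z (@Ordinal n.+2 n (leqnSn n.+1))) => [-> j|n1]; first by rewrite HC H1 scale0r.
move=> j; rewrite HC ua_path_other ?scaler0 //.
  by apply: contra n0 => /eqP h; apply/eqP/val_inj; rewrite /=; lia.
by apply: contra n1 => /eqP h; apply/eqP/val_inj; rewrite /=; lia.
Qed.

Lemma right_free (k : fieldType) q : right_free_at k q.
Proof.
exists (Eright k q) => p.
case: (ltnP q p) => [qp|pq].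
  split.
    move=> x; exists (fun z j => 0); split; first by move=> z j; exists 0; rewrite scale0r.
    rewrite big1; first exact: kD_triv.
    by move=> z _; apply: big1 => j _; exact: kcomp0r.
  move=> beta _ _ z j; apply: kD_triv; have := ltn_ord z; lia.
have Fgen : forall (z0 : 'I_q.+1) (hz0 : val z0 = p)
   (beta : forall z : 'I_q.+1, 'I_(size (Eright k q z)) -> kD k p z) C,
   (forall z j, beta z j = C z j *: ua_path k p z) ->
   forall (z : 'I_q.+1), z != z0 -> (val z != p.+1) ->
   \sum_(j < size (Eright k q z)) kcomp (nth 0 (Eright k q z) j) (beta z j) = 0.
  move=> z0 hz0 beta C HC z h0 h1; apply: big1 => j _.
  rewrite HC ua_path_other ?scaler0 ?kcomp0r //.
  by apply: contra h0 => /eqP h; apply/eqP/val_inj; rewrite hz0; exact: h.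
case: (eqVneq p q) => [E|ne].
{
  subst q.
  have [pi1 [P1 N1 I1 C1]] := Eseq_pick k (fun e : dhom p p => fg e == 0%N).
  have hu : forall j : 'I_(size (Eright k p ord_max)), nth 0 (Eright k p ord_max) j = [ffun y => (y == pi1 j)%:R].
    by move=> j; rewrite /Eright N1.
  have hcov2 : forall x : dhom p p, ~~ (fg x == 0%N) -> exists i : 'I_0, from0 _ i = x.
    by move=> x; rewrite fg_sq.
  have hG2 : forall i : 'I_0, ~~ (fg (from0 (dhom p p) i) == 0%N) by case.
  have hw : forall i : 'I_0, (fun _ => (0 : kD k p p)) i (from0 _ i) != 0 by case.
  have hw' : forall i i' : 'I_0, i != i' -> (fun _ => (0 : kD k p p)) i (from0 _ i') = 0 by case.
  have Fz (beta : forall z : 'I_p.+1, 'I_(size (Eright k p z)) -> kD k p z) C :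
     (forall z j, beta z j = C z j *: ua_path k p z) ->
     \sum_(z < p.+1) \sum_(j < size (Eright k p z)) kcomp (nth 0 (Eright k p z) j) (beta z j)
     = \sum_(j < size (Eright k p ord_max)) C ord_max j *: nth 0 (Eright k p ord_max) j
       + \sum_(i < 0) (fun _ => 0) i *: (fun _ => (0 : kD k p p)) i.
    move=> HC; rewrite big_ord0 addr0 (split1 _ (z0 := ord_max)).
      by apply: eq_bigr => j _; rewrite HC kcompZr ua_path_id kcomp_idr.
    move=> z hz; apply: (Fgen ord_max erefl _ C HC z hz).
    by rewrite neq_ltn ltn_ord.
  split.
    move=> x.
    have [a [c ->]] := tri_span (G := fun e : dhom p p => fg e == 0%N) hu I1 P1 C1 hG2 hcov2 hw hw' x.
    exists (fun (z : 'I_p.+1) (j : 'I_(size (Eright k p z))) => (if val z == p then a j else 0) *: ua_path k p z).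
    split; first by move=> z j; eexists.
    by rewrite (Fz _ (fun (z : 'I_p.+1) (j : 'I_(size (Eright k p z))) => if val z == p then a j else 0)) //= eqxx !big_ord0.
  move=> beta Hb S.
  have ex z j : exists c : k, beta z j == c *: ua_path k p z by case: (Hb z j) => c ->; exists c.
  pose C z j := xchoose (ex z j).
  have HC z j : beta z j = C z j *: ua_path k p z by apply/eqP; exact: (xchooseP (ex z j)).
  rewrite (Fz _ C HC) in S.
  have [H0 _] := tri_indep (G := fun e : dhom p p => fg e == 0%N) hu I1 P1 hG2 hw hw' S.
  move=> z; case: (eqVneq z ord_max) => [-> j|n0]; first by rewrite HC H0 scale0r.
  move=> j; rewrite HC ua_path_other ?scaler0 //.
    by rewrite neq_ltn ltn_ord. }
have {ne}pq : (p < q)%N by rewrite ltn_neqAle ne pq.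
have h0 : (p < q.+1)%N by lia.
have h1 : (p.+1 < q.+1)%N by lia.
pose z0 := Ordinal h0. pose z1 := Ordinal h1.
have [pi1 [P1 N1 I1 C1]] := Eseq_pick k (fun e : dhom p q => fg e == 0%N).
have [rho [P2 N2 I2 C2]] := Eseq_pick k (fun e : dhom p.+1 q => fg e == 0%N).
pose u (j : 'I_(size (Eright k q z0))) := nth 0 (Eright k q z0) j.
pose w (i : 'I_(size (Eright k q z1))) := kcomp (nth 0 (Eright k q z1) i) (ua_d k p).
pose pi2 (i : 'I_(size (Eright k q z1))) := dcomp (rho i) (delta ord0).
have hu : forall j, u j = [ffun y => (y == pi1 j)%:R] by move=> j; rewrite /u /Eright N1.
have r0 i : val (rho i ord0) = 0%N by apply: right_e0; apply/eqP; exact: P2.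
have hG2 : forall i, ~~ (fg (pi2 i) == 0%N) by move=> i; exact: right_notG.
have hcov2 : forall x : dhom p q, ~~ (fg x == 0%N) -> exists i, pi2 i = x.
  move=> x hx; have [e [e0 fe Ee]] := right_cover hx.
  by have [i Ei] := C2 e (introT eqP fe); exists i; rewrite /pi2 Ei.
have wE i y : w i y = \sum_(i' < p.+1) (-1) ^+ i' * (y == dcomp (rho i) (delta i'))%:R.
  rewrite /w /Eright N2 kcomp_bvec_ud sum_ffunE; apply: eq_bigr => i' _.
  by rewrite !ffunE.
have hw : forall i, w i (pi2 i) != 0.
  move=> i; rewrite wE (bigD1 ord0) //= eqxx mulr1 expr0 big1 ?addr0 ?oner_eq0 //.
  move=> i' ne; case: eqP; rewrite ?mulr0 // /pi2 => E.
  have [E1 _] := right_piv (r0 i) (r0 i) (esym E).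
  by rewrite E1 eqxx in ne.
have hw' : forall i i', i != i' -> w i (pi2 i') = 0.
  move=> i i' ne; rewrite wE big1 // => i'' _.
  case: eqP; rewrite ?mulr0 // /pi2 => E.
  have [_ E1] := right_piv (r0 i) (r0 i') (esym E).
  by move: ne; rewrite (I2 _ _ E1) eqxx.
have Fz (beta : forall z : 'I_q.+1, 'I_(size (Eright k q z)) -> kD k p z) C :
   (forall z j, beta z j = C z j *: ua_path k p z) ->
   \sum_(z < q.+1) \sum_(j < size (Eright k q z)) kcomp (nth 0 (Eright k q z) j) (beta z j)
   = \sum_(j < size (Eright k q z0)) C z0 j *: u j
     + \sum_(i < size (Eright k q z1)) C z1 i *: w i.
  move=> HC.
  rewrite (split2 _ (z0 := z0) (z1 := z1)); last first.
  - move=> z hz0 hz1; apply: (Fgen z0 erefl _ C HC z hz0).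
    by apply: contra hz1 => /eqP h; apply/eqP/val_inj.
  - by apply/eqP => /(congr1 val) /=; lia.
  congr (_ + _); apply: eq_bigr => j _; rewrite HC kcompZr.
    by rewrite ua_path_id kcomp_idr.
  by rewrite ua_path_d.
split.
  move=> x.
  have [a [c ->]] := tri_span (G := fun e : dhom p q => fg e == 0%N) hu I1 P1 C1 hG2 hcov2 hw hw' x.
  exists (fun (z : 'I_q.+1) (j : 'I_(size (Eright k q z))) => (if val z == p then a j else if val z == p.+1 then c j else 0) *: ua_path k p z).
  split; first by move=> z j; eexists.
  rewrite (Fz _ (fun (z : 'I_q.+1) (j : 'I_(size (Eright k q z))) => (if val z == p then a j else if val z == p.+1 then c j else 0))) //.
  by rewrite /= eqxx (gtn_eqF (ltnSn p)) eqxx.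
move=> beta Hb S.
have ex z j : exists c : k, beta z j == c *: ua_path k p z by case: (Hb z j) => c ->; exists c.
pose C z j := xchoose (ex z j).
have HC z j : beta z j = C z j *: ua_path k p z by apply/eqP; exact: (xchooseP (ex z j)).
rewrite (Fz _ C HC) in S.
have [H0 H1] := tri_indep (G := fun e : dhom p q => fg e == 0%N) hu I1 P1 hG2 hw hw' S.
move=> z.
case: (eqVneq z z0) => [-> j|n0]; first by rewrite HC H0 scale0r.
case: (eqVneq z z1) => [-> j|n1]; first by rewrite HC H1 scale0r.
by move=> j; rewrite HC ua_path_other ?scaler0.
Qed.

Theorem lemma2p2 (k : fieldType) :
  (forall p : nat, left_free_at k p) /\ (forall q : nat, right_free_at k q).
Proof. by split=> ?; [exact: left_free|exact: right_free]. Qed.
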